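(* In the transactional panorama model described in the context, answering every read transaction so as to maintain consistency-fresh ($C_f$), i.e., returning the states of its views from the latest version of the view graph, also maintains monotonicity; however, consistency-fresh and visibility cannot always be maintained together (there are executions in which the states returned under consistency-fresh contain a UC).
   Context: A view graph is a directed acyclic graph on a fixed set $N$ of nodes (source data and views); there is an edge $n_j \to n_i$ if view $n_i$ takes $n_j$ as input, and the dependents of a node are the nodes reachable from it. The view graph is multi-versioned. Write transactions $w^{t_1},\dots,w^{t_n}$ (timestamps $t_1<\dots<t_n$, starting from an initial version $G^{t_0}$) each modify some source nodes and must recompute their dependents; they are processed one at a time in timestamp order. Write transaction $w^{t_i}$ creates version $G^{t_i}=(E,N,V^{t_i})$, where for each node $n_k$ the set $V^{t_i}$ contains: the result $v_k^{t_i}$ if $w^{t_i}$ updates $n_k$ and has already computed it; a placeholder $UC_k^{t_i}$ (''under computation'') if $w^{t_i}$ updates $n_k$ but has not yet computed it; or the result of $n_k$ from the previous version if $w^{t_i}$ does not update $n_k$. The latest version is the version created by the most recent write transaction (possibly not yet committed). The timestamp of a returned state is the timestamp of the version it belongs to. Read transactions $r^{s_1},\dots,r^{s_m}$ ($s_1<\dots<s_m$) each read the set of views in the user's current viewport (a subset of $N$, which may change between reads) and return immediately, without waiting, a set $H^{s_i}$ containing one state (a view result or a UC) per view read. Monotonicity: for any view $n_k$ read by two transactions $r^{s_i}, r^{s_j}$ with $s_i<s_j$, returning states with timestamps $t_p$ and $t_q$, we have $t_p \le t_q$. Visibility: no $H^{s_i}$ contains a UC. Consistency: for each $r^{s_i}$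 there is a version $G^{t_j}=(E,N,V^{t_j})$ with $t_j\le s_i$ and $H^{s_i}\subseteq V^{t_j}$. *)

(* Defs.v *)
From mathcomp Require Import all_boot.
Set Implicit Arguments. Unset Strict Implicit. Unset Printing Implicit Defensive.

(* Time is a common discrete timeline [nat] on which write timestamps
   t_0 < t_1 < ... < t_n and read timestamps s_1 < ... < s_m live. *)

Inductive state (R : Type) := Res of R | UC.
Arguments UC {R}.

Definition sources (N : finType) (E : rel N) : {set N} :=
  [set k | [forall j, ~~ E j k]].

Definition updated (N : finType) (E : rel N) (S : {set N}) : {set N} :=
  [set k | [exists x in S, connect E x k]].

Record execution (N : finType) (R : Type) := Execution {
  E : rel N;                                   (* E j i : edge n_j -> n_i *)
  E_acyclic : forall x y, E x y -> ~~ connect E y x;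
  nw : nat;
  wt : nat -> nat;                             (* wt 0 = t_0 (initial), wt i = t_i *)
  wt_incr : forall i, i < nw -> wt i < wt i.+1;
  src : nat -> {set N};                        (* source nodes modified by w^{t_i} *)
  src_sources : forall i, src i \subset sources E;
  res : nat -> N -> R;                         (* res i k = v_k^{t_i} (res 0 = initial) *)
  done : nat -> nat -> {set N};                (* nodes computed by w^{t_i} by time s *)
  done_start : forall i s, s < wt i -> done i s = set0;
  done_mono : forall i s1 s2, s1 <= s2 -> done i s1 \subset done i s2;
  (* writes are processed one at a time: w^{t_i} has computed all its
     updated nodes before w^{t_{i+1}} starts *)
  done_finish : forall i s, 0 < i -> i < nw -> wt i.+1 <= s ->
                  updated E (src i) \subset done i s
}.

Section Model.
Variables (N : finType) (R : Type) (X : execution N R).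

Definition upd (i : nat) : {set N} := updated (E X) (src X i).

(* content of version G^{t_i} at time s, node k *)
Fixpoint vstate (i s : nat) (k : N) : state R :=
  match i with
  | 0 => Res (res X 0 k)
  | i'.+1 => if k \in upd i then
               (if k \in done X i s then Res (res X i k) else UC)
             else vstate i' s k
  end.

Definition latest (s : nat) : nat := \max_(i < (nw X).+1 | wt X i <= s) i.

Definition Cf_answer (rs : nat -> nat) (j : nat) (k : N) : nat * state R :=
  (wt X (latest (rs j)), vstate (latest (rs j)) (rs j) k).

Definition valid_reads (m : nat) (rs : nat -> nat) : Prop :=
  (forall j, j.+1 < m -> rs j < rs j.+1) /\
  (forall j, j < m -> wt X 0 < rs j) /\
  (forall j i, j < m -> i <= nw X -> rs j != wt X i).
End Model.

(* Properties of an answer function H : read index -> node -> (timestamp, state)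
   for m reads with viewports vp. *)
Definition monotonic (N : finType) (R : Type) (m : nat) (vp : nat -> {set N})
  (H : nat -> N -> nat * state R) : Prop :=
  forall i j k, i < j -> j < m -> k \in vp i -> k \in vp j ->
    (H i k).1 <= (H j k).1.

Definition visible (N : finType) (R : Type) (m : nat) (vp : nat -> {set N})
  (H : nat -> N -> nat * state R) : Prop :=
  forall j k, j < m -> k \in vp j -> (H j k).2 <> UC.

(* Main.v *)
Require Import Defs.
From mathcomp Require Import all_boot.

Lemma wt_mono (N : finType) (R : Type) (X : execution N R) i j :
  i <= j -> j <= nw X -> wt X i <= wt X j.
Proof.
elim: j => [|j IH]; first by rewrite leqn0 => /eqP ->.
rewrite leq_eqVlt => /orP [/eqP -> //|Hij] Hj.
apply: leq_trans (IH Hij (ltnW Hj)) (ltnW (wt_incr Hj)).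
Qed.

Lemma latest_mono (N : finType) (R : Type) (X : execution N R) a b :
  a <= b -> latest X a <= latest X b.
Proof.
move=> Hab; rewrite /latest; apply/bigmax_leqP => i Hi.
apply: (leq_bigmax_cond (F := fun i : 'I_(nw X).+1 => nat_of_ord i)).
exact: leq_trans Hi Hab.
Qed.

Lemma latest_le (N : finType) (R : Type) (X : execution N R) a :
  latest X a <= nw X.
Proof. rewrite /latest; apply/bigmax_leqP => i _; by rewrite -ltnS. Qed.

Definition ex1 : execution unit unit.
Proof.
refine (@Execution unit unit (fun _ _ => false) _ 1 (fun i => i) _
  (fun _ => setT) _ (fun _ _ => tt) (fun _ _ => set0) _ _ _).
- by [].
- by [].
- move=> i; apply/subsetP => k _; rewrite /sources inE; apply/forallP => j //.
- by [].
- move=> i s1 s2 _; exact: sub0set.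
- move=> i s H1 H2; exfalso; by case: i H1 H2 => [|[|]].
Defined.

Theorem theorem2p5 :
  (forall (N : finType) (R : Type) (X : execution N R) (m : nat)
          (rs : nat -> nat) (vp : nat -> {set N}),
      valid_reads X m rs -> monotonic m vp (Cf_answer X rs))
  /\
  (exists (N : finType) (R : Type) (X : execution N R) (m : nat)
          (rs : nat -> nat) (vp : nat -> {set N}),
      valid_reads X m rs /\ ~ visible m vp (Cf_answer X rs)).
Proof.
split.
- move=> N R X m rs vp [Hinc _]; rewrite /monotonic => i j k Hij Hjm _ _ /=.
  have Hr : rs i <= rs j.
    elim: j Hij Hjm => [//|j IH] Hij Hjm.
    rewrite ltnS leq_eqVlt in Hij; case/orP: Hij => [/eqP ->|Hij].
      exact: ltnW (Hinc _ Hjm).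
    exact: leq_trans (IH Hij (ltnW Hjm)) (ltnW (Hinc _ Hjm)).
  apply: wt_mono; last exact: latest_le.
  exact: latest_mono.
- exists unit, unit, ex1, 1, (fun _ => 2), (fun _ => setT).
  split.
    split; first by move=> [|j].
    split; first by move=> [|j].
    by move=> j [|[|i]].
  move=> H; apply: (H 0 tt) => //; rewrite ?in_setT //.
  rewrite /Cf_answer /=.
  have -> : latest ex1 2 = 1.
    by rewrite /latest /= big_mkcond !big_ord_recr big_ord0.
  rewrite /vstate.
  have -> : tt \in upd ex1 1.
    rewrite /upd /updated inE; apply/existsP; exists tt; by rewrite inE connect0.
  by rewrite inE.
Qed.
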